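(* Let $G$ be a connected Lie group, $\Gamma$ a discrete subgroup of $H=PSL(2,\mathbb{R})\times G$ and $X=\Gamma\backslash H$. If $\Gamma$ contains a semi-parabolic element, then there is a point $x\in X$ whose positive semi-orbit under $D^+$ diverges: for every sequence $d_n=\operatorname{diag}(\lambda_n,\lambda_n^{-1})\in D^+$ with $\lambda_n\to+\infty$, the sequence $x d_n$ has no convergent subsequence in $X$.
   Context: $D^+=\{\begin{pmatrix}\lambda&0\\0&\lambda^{-1}\end{pmatrix}:\lambda>1\}\subset PSL(2,\mathbb{R})$ acts on $X$ on the right by $\Gamma(f,g)d=\Gamma(fd,g)$. An element $(f,g)\in PSL(2,\mathbb{R})\times G$ is semi-parabolic if $f$ is conjugate in $PSL(2,\mathbb{R})$ to an element $u\neq Id$ of $U=\{\begin{pmatrix}1&t\\0&1\end{pmatrix}\}$. *)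

(* Defs.v *)
From HB Require Import structures.
From mathcomp Require Import all_boot all_order all_algebra.
From mathcomp Require Import all_classical all_reals all_analysis.
Set Implicit Arguments. Unset Strict Implicit. Unset Printing Implicit Defensive.
Import Order.TTheory GRing.Theory Num.Theory.
Import numFieldNormedType.Exports.
Local Open Scope classical_set_scope.
Local Open Scope ring_scope.

Definition is_topological_group (G : topologicalType)
    (mul : G -> G -> G) (inv : G -> G) (e : G) : Prop :=
  [/\ (forall x y z, mul x (mul y z) = mul (mul x y) z),
      (forall x, mul e x = x /\ mul x e = x),
      (forall x, mul (inv x) x = e /\ mul x (inv x) = e),
      continuous (fun p : G * G => mul p.1 p.2) &
      continuous inv].

Section H.
Variables (R : realType) (G : topologicalType)
  (mulG : G -> G -> G) (invG : G -> G) (eG : G).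

(* SL(2,R) x G, seen inside 'M[R]_2 * G with the product topology. *)
Definition inSLG (h : 'M[R]_2 * G) : Prop := \det h.1 = 1.

Definition mulH (h k : 'M[R]_2 * G) : 'M[R]_2 * G :=
  (h.1 *m k.1, mulG h.2 k.2).
Definition invH (h : 'M[R]_2 * G) : 'M[R]_2 * G := (invmx h.1, invG h.2).
Definition oneH : 'M[R]_2 * G := (1%:M, eG).

(* Gt is the preimage in SL(2,R) x G of a subgroup Gamma of PSL(2,R) x G:
   a subgroup of SL(2,R) x G containing the central element (-1, e). *)
Definition lifted_subgroup (Gt : set ('M[R]_2 * G)) : Prop :=
  [/\ Gt `<=` inSLG, Gt oneH, Gt ((-1)%:M, eG),
      (forall h k, Gt h -> Gt k -> Gt (mulH h k)) &
      (forall h, Gt h -> Gt (invH h))].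

Definition discrete_set (Gt : set ('M[R]_2 * G)) : Prop :=
  forall g, Gt g -> exists2 U, nbhs g U & U `&` Gt = [set g].

Definition unipotent (t : R) : 'M[R]_2 := \matrix_(i < 2, j < 2)
  (if (i == 0) && (j == 1) then t else if i == j then 1 else 0).

Definition diagD (l : R) : 'M[R]_2 := \matrix_(i < 2, j < 2)
  (if i == j then (if i == 0 then l else l^-1) else 0).

(* (f,g) is semi-parabolic: f is conjugate in PSL(2,R) to a nontrivial
   element of U; in terms of a lift F in SL(2,R): F = +- P u_t P^-1 with
   det P = 1 and t <> 0. *)
Definition semi_parabolic (h : 'M[R]_2 * G) : Prop :=
  exists P : 'M[R]_2, exists t : R, \det P = 1 /\ t != 0 /\
    (h.1 = P *m unipotent t *m invmx P \/ h.1 = - (P *m unipotent t *m invmx P)).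

(* Convergence in X = Gt \ (SL(2,R) x G) for the quotient topology:
   the orbit sequence Gt z_n converges to Gt y iff z_n eventually lies in every
   open Gt-saturated neighbourhood of y (open sets of X = saturated open sets
   of SL(2,R) x G, the latter being the traces of open sets W of 'M_2 * G). *)
Definition saturated (Gt : set ('M[R]_2 * G)) (W : set ('M[R]_2 * G)) : Prop :=
  forall g h, Gt g -> inSLG h -> W h -> W (mulH g h).

Definition quot_converges (Gt : set ('M[R]_2 * G))
    (z : nat -> 'M[R]_2 * G) (y : 'M[R]_2 * G) : Prop :=
  forall W : set ('M[R]_2 * G), open W -> saturated Gt W -> W y ->
    exists N, forall n, (N <= n)%N -> W (z n).

End H.

(* Main.v *)
Require Import Defs.
From HB Require Import structures.
From mathcomp Require Import all_boot all_order all_algebra.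
From mathcomp Require Import all_classical all_reals all_analysis.
Import Order.TTheory GRing.Theory Num.Theory.
Import numFieldNormedType.Exports.
Local Open Scope classical_set_scope.
Local Open Scope ring_scope.
From mathcomp Require Import ring lra.
Section S.
Variable R : realType.
Lemma cvg_mx2 (X : Type) (F : set_system X) (FF : Filter F) (f : X -> 'M[R]_2) (M : 'M[R]_2) :
  (forall i j, (fun x => f x i j) @ F --> M i j) -> f @ F --> M.
Proof.
move=> h A /=. rewrite /nbhs /=. move=> [P hP sPA].
have : \forall x \near F, forall k : 'I_2 * 'I_2, P k.1 k.2 (f x k.1 k.2).
  apply: filter_forall => k; exact: (h k.1 k.2 _ (hP k.1 k.2)).
apply: filterS => x Hx; apply: sPA => i j; exact: (Hx (i, j)).
Qed.

Lemma cvg_entry (X : Type) (F : set_system X) (FF : Filter F) (f : X -> 'M[R]_2) (M : 'M[R]_2) i j :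
  f @ F --> M -> (fun x => f x i j) @ F --> M i j.
Proof. move=> h. exact: (continuous_cvg _ (@coord_continuous R 2 2 i j M) h). Qed.

Lemma cvg_mulmx (X : Type) (F : set_system X) (FF : Filter F) (f g : X -> 'M[R]_2) (A B : 'M[R]_2) :
  f @ F --> A -> g @ F --> B -> (fun x => f x *m g x) @ F --> A *m B.
Proof.
move=> hf hg; apply: cvg_mx2 => i j.
have E : forall (C D : 'M[R]_2), (C *m D) i j = C i 0 * D 0 j + C i 1 * D 1 j.
  move=> C D; rewrite mxE !big_ord_recl big_ord0 addr0 /=; congr (C i _ * D _ j + C i _ * D _ j); exact: val_inj.
rewrite E.
have -> : (fun x => (f x *m g x) i j) = (fun x => f x i 0 * g x 0 j + f x i 1 * g x 1 j).
  by apply: funext => x; rewrite E.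
apply: cvgD; apply: cvgM; exact: cvg_entry.
Qed.
End S.

Section G.
Variables (G : topologicalType) (mulG : G -> G -> G) (invG : G -> G) (eG : G)
  (hG : is_topological_group mulG invG eG).

Lemma mulGA x y z : mulG x (mulG y z) = mulG (mulG x y) z.
Proof. by case: hG. Qed.
Lemma mul1G x : mulG eG x = x.
Proof. by case: hG => _ h _ _ _; case: (h x). Qed.
Lemma mulG1 x : mulG x eG = x.
Proof. by case: hG => _ h _ _ _; case: (h x). Qed.
Lemma mulVG x : mulG (invG x) x = eG.
Proof. by case: hG => _ _ h _ _; case: (h x). Qed.
Lemma mulGV x : mulG x (invG x) = eG.
Proof. by case: hG => _ _ h _ _; case: (h x). Qed.

Lemma cvg_mulG (X : Type) (F : set_system X) (FF : Filter F) (a b : X -> G) (A B : G) :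
  a @ F --> A -> b @ F --> B -> (fun x => mulG (a x) (b x)) @ F --> mulG A B.
Proof.
move=> ha hb; apply: (@continuous2_cvg _ _ _ _ F _ a b mulG A B) => //.
case: hG => _ _ _ hc _; exact: (hc (A, B)).
Qed.

Lemma cvg_invG (X : Type) (F : set_system X) (FF : Filter F) (a : X -> G) (A : G) :
  a @ F --> A -> (fun x => invG (a x)) @ F --> invG A.
Proof.
move=> ha; apply: (@continuous_cvg _ _ _ F _ a invG A) => //.
by case: hG => _ _ _ _ hc; exact: hc.
Qed.
End G.
Arguments cvg_mx2 {R}. Arguments cvg_entry {R}. Arguments cvg_mulmx {R}.
Section M.
Variable R : realType.
Definition ad (w : 'M[R]_2) : 'M[R]_2 := \matrix_(i < 2, j < 2)
  (if i == 0 then (if j == 0 then w 1 1 else - w 0 1)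
   else (if j == 0 then - w 1 0 else w 0 0)).

Lemma det2 (w : 'M[R]_2) : \det w = w 0 0 * w 1 1 - w 0 1 * w 1 0.
Proof.
rewrite (expand_det_row _ 0) !big_ord_recl big_ord0 addr0 /cofactor !det_mx11 /=.
rewrite !mxE /= expr0 expr1 !mul1r mulN1r mulrN.
by congr (w _ _ * w _ _ - w _ _ * w _ _); apply: val_inj.
Qed.

Lemma ord2 (i : 'I_2) : i = 0 \/ i = 1.
Proof. by case: i => [[|[|//]] ?]; [left|right]; apply: val_inj. Qed.

Lemma mul_ad (w : 'M[R]_2) : w *m ad w = (\det w)%:M.
Proof.
apply/matrixP => i j; rewrite det2 !mxE !big_ord_recl big_ord0 addr0 /= !mxE /=.
have L1 : (lift ord0 ord0 : 'I_2) = 1 by apply: val_inj.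
have L0 : (ord0 : 'I_2) = 0 by apply: val_inj.
by case: (ord2 i) => ->; case: (ord2 j) => -> /=;
  rewrite ?(eqxx, mulr1n, mulr0n) /= L1 L0; ring.
Qed.

Lemma ad_mul (w : 'M[R]_2) : \det w = 1 -> w *m ad w = 1%:M.
Proof. by move=> h; rewrite mul_ad h. Qed.

Lemma ad_mul' (w : 'M[R]_2) : \det w = 1 -> ad w *m w = 1%:M.
Proof. by move=> h; apply: mulmx1C; rewrite ad_mul. Qed.

Lemma ad_inv (w : 'M[R]_2) : \det w = 1 -> invmx w = ad w.
Proof.
move=> h; have [wu _] := mulmx1_unit (ad_mul _ h).
by rewrite -[invmx w]mulmx1 -(ad_mul _ h) mulmxA mulVmx // mul1mx.
Qed.

Lemma unit_det1 (w : 'M[R]_2) : \det w = 1 -> w \in unitmx.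
Proof. by move=> h; rewrite unitmxE h unitr1. Qed.

Lemma ad_scale1 (k : R) : ad (k *: 1%:M) = k *: 1%:M.
Proof.
have L1 : (lift ord0 ord0 : 'I_2) = 1 by apply: val_inj.
apply/matrixP => i j; rewrite !mxE.
by case: (ord2 i) => ->; case: (ord2 j) => -> /=; rewrite ?mxE /= ?(eqxx, mulr1n, mulr0n, mulr0, mulr1, oppr0).
Qed.

Lemma uni0 : unipotent (0 : R) = 1%:M.
Proof.
apply/matrixP => i j; rewrite !mxE.
by case: (ord2 i) => ->; case: (ord2 j) => -> /=.
Qed.

Lemma uni_eq1 (s : R) : unipotent s = 1%:M -> s = 0.
Proof. by move/matrixP => /(_ 0 1); rewrite !mxE /=. Qed.

Lemma uni_diag (l t : R) : l != 0 ->
  diagD l *m unipotent (t / l ^+ 2) = unipotent t *m diagD l.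
Proof.
move=> l0; apply/matrixP => i j; rewrite !mxE !big_ord_recl !big_ord0 !addr0 /= !mxE /=.
have L1 : (lift ord0 ord0 : 'I_2) = 1 by apply: val_inj.
have L0 : (ord0 : 'I_2) = 0 by apply: val_inj.
case: (ord2 i) => ->; case: (ord2 j) => -> /=; rewrite ?L1 ?L0 /=; by field.
Qed.

Lemma det_diagD (l : R) : l != 0 -> \det (diagD l) = 1.
Proof. by move=> l0; rewrite det2 !mxE /= mulr0 subr0 mulfV. Qed.

Lemma cvg_ad (X : Type) (F : set_system X) (FF : Filter F) (f : X -> 'M[R]_2) (A : 'M[R]_2) :
  f @ F --> A -> (fun x => ad (f x)) @ F --> ad A.
Proof.
move=> h; apply: cvg_mx2 => i j; rewrite !mxE.
have -> : (fun x => ad (f x) i j) = (fun x => if i == 0 then (if j == 0 then f x 1 1 else - f x 0 1)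
   else (if j == 0 then - f x 1 0 else f x 0 0)) by apply: funext => x; rewrite mxE.
by case: (i == 0); case: (j == 0); try apply: cvgN; apply: cvg_entry.
Qed.

Lemma cvg_uni (X : Type) (F : set_system X) (FF : Filter F) (f : X -> R) (S : R) :
  f @ F --> S -> (fun x => unipotent (f x)) @ F --> unipotent S.
Proof.
move=> h; apply: cvg_mx2 => i j; rewrite !mxE.
have -> : (fun x => unipotent (f x) i j) = (fun x => if (i == 0) && (j == 1) then f x else if i == j then 1 else 0)
  by apply: funext => x; rewrite mxE.
by case: ((i == 0) && (j == 1)) => //; apply: cvg_cst.
Qed.

Lemma cvg_scale (X : Type) (F : set_system X) (FF : Filter F) (f : X -> 'M[R]_2) (A : 'M[R]_2) (k : R) :
  f @ F --> A -> (fun x => k *: f x) @ F --> k *: A.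
Proof.
move=> h; apply: cvg_mx2 => i j; rewrite !mxE.
have -> : (fun x => (k *: f x) i j) = (fun x => k * f x i j) by apply: funext => x; rewrite mxE.
by apply: cvgM; [apply: cvg_cst | apply: cvg_entry].
Qed.
End M.

Lemma cvg_fst' (T U : topologicalType) (X : Type) (F : set_system X) (FF : Filter F) (a : X -> T * U) (A : T * U) :
  a @ F --> A -> (fun x => (a x).1) @ F --> A.1.
Proof.
move=> h; apply: (continuous_cvg _ _ h) => P /= nP.
by exists (P, setT) => /=; [split=> //; exact: filterT | move=> [u v] [] /=].
Qed.
Lemma cvg_snd' (T U : topologicalType) (X : Type) (F : set_system X) (FF : Filter F) (a : X -> T * U) (A : T * U) :
  a @ F --> A -> (fun x => (a x).2) @ F --> A.2.
Proof.
move=> h; apply: (continuous_cvg _ _ h) => P /= nP.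
by exists (setT, P) => /=; [split=> //; exact: filterT | move=> [u v] [] /=].
Qed.

Arguments ad {R}. Arguments det2 {R}. Arguments mul_ad {R}. Arguments ad_mul {R}.
Arguments ad_mul' {R}. Arguments ad_inv {R}. Arguments unit_det1 {R}. Arguments ad_scale1 {R}.
Arguments uni0 {R}. Arguments uni_eq1 {R}. Arguments uni_diag {R}. Arguments det_diagD {R}.
Arguments cvg_ad {R}. Arguments cvg_uni {R}. Arguments cvg_scale {R}. Arguments ord2 : clear implicits.
Section Main.
Variables (R : realType) (G : topologicalType) (mulG : G -> G -> G) (invG : G -> G) (eG : G)
  (hG : is_topological_group mulG invG eG) (Gt : set ('M[R]_2 * G))
  (hsub : lifted_subgroup mulG invG eG Gt).

Let H := ('M[R]_2 * G)%type.
Let mGA := @mulGA G mulG invG eG hG.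
Let m1G := @mul1G G mulG invG eG hG.
Let mG1 := @mulG1 G mulG invG eG hG.
Let mVG := @mulVG G mulG invG eG hG.
Let mGV := @mulGV G mulG invG eG hG.
Let cmulG := @cvg_mulG G mulG invG eG hG.
Let cinvG := @cvg_invG G mulG invG eG hG.

Lemma Gt_det h : Gt h -> \det h.1 = 1.
Proof. by case: hsub => + _ _ _ _; apply. Qed.
Lemma Gt_mul a b : Gt a -> Gt b -> Gt (mulH mulG a b).
Proof. by case: hsub => _ _ _ + _; apply. Qed.
Lemma Gt_inv a : Gt a -> Gt (invH invG a).
Proof. by case: hsub => _ _ _ _; apply. Qed.
Lemma Gt_one : Gt (oneH R eG).
Proof. by case: hsub. Qed.

Lemma cvg_pair2 (T U : topologicalType) (X : Type) (F : set_system X) (FF : Filter F) (f : X -> T) (g : X -> U) (a : T) (b : U) :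
  f @ F --> a -> g @ F --> b -> (fun x => (f x, g x)) @ F --> (a, b).
Proof.
move=> hf hg P /= [[P1 P2] /= [n1 n2] s].
have h1 : F (f @^-1` P1) := hf _ n1.
have h2 : F (g @^-1` P2) := hg _ n2.
have h3 := @filterI _ F FF _ _ h1 h2.
rewrite /= nbhs_simpl /=.
by apply: (filterS _ h3) => x [h1' h2']; apply: s; split.
Qed.

Definition Wof (Om : set H) : set H :=
  [set h | exists d, Gt d /\ Om (mulH mulG d h)].

Lemma cvg_mulH (X : Type) (F : set_system X) (FF : Filter F) (a b : X -> H) (A B : H) :
  a @ F --> A -> b @ F --> B -> (fun x => mulH mulG (a x) (b x)) @ F --> mulH mulG A B.
Proof.
move=> ha hb; rewrite /mulH; apply: cvg_pair2 => /=.
  by apply: cvg_mulmx; apply: cvg_fst'.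
by apply: cmulG; apply: cvg_snd'.
Qed.

Lemma Wof_open Om : open Om -> open (Wof Om).
Proof.
move=> oO; rewrite openE => h [d [gd Od]].
have : (fun x => mulH mulG d x) @ nbhs h --> mulH mulG d h.
  by apply: cvg_mulH; [apply: cvg_cst | apply: cvg_id].
move=> /(_ Om (open_nbhs_nbhs (conj oO Od))) hO.
have hO' : nbhs h [set x | Om (mulH mulG d x)] := hO.
by apply: (filterS _ hO') => x Ox; exists d.
Qed.

Lemma Wof_sat Om : saturated mulG Gt (Wof Om).
Proof.
move=> g h gg _ [d [gd Od]].
exists (mulH mulG d (invH invG g)); split; first by apply: Gt_mul => //; apply: Gt_inv.
rewrite /mulH /invH /=.
rewrite -!mulmxA (mulmxA (invmx g.1)) mulVmx ?mul1mx; last by apply: unit_det1; apply: Gt_det.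
by rewrite -mGA (mGA (invG g.2)) mVG m1G.
Qed.

Lemma Wof_self Om y : Om y -> Wof Om y.
Proof.
move=> Oy; exists (oneH R eG); split; first exact: Gt_one.
by rewrite /mulH /oneH /= mul1mx m1G -surjective_pairing.
Qed.

Lemma inv_cancel a b : Gt a -> mulH mulG (invH invG a) b = oneH R eG -> b = a.
Proof.
move=> ga; rewrite /mulH /invH /oneH => -[e1 e2].
have ua : a.1 \in unitmx by apply: unit_det1; apply: Gt_det.
apply/injective_projections => /=.
  by rewrite -[b.1]mul1mx -(mulmxV ua) -mulmxA e1 mulmx1.
by rewrite -[b.2]m1G -(mGV a.2) -mGA e2 mG1.
Qed.

Definition Cf (k : R) (g : G) (w : H) (s : R) : H :=
  (k *: (w.1 *m unipotent s *m ad w.1), mulG (mulG w.2 g) (invG w.2)).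

Definition Psi (k : R) (g : G) (p : (H * H) * (R * R)) : H :=
  mulH mulG (ad (Cf k g p.1.1 p.2.1).1, invG (Cf k g p.1.1 p.2.1).2) (Cf k g p.1.2 p.2.2).

Lemma cvg_Cf k g (X : Type) (F : set_system X) (FF : Filter F) (w : X -> H) (s : X -> R) W S :
  w @ F --> W -> s @ F --> S -> (fun x => Cf k g (w x) (s x)) @ F --> Cf k g W S.
Proof.
move=> hw hs; rewrite /Cf; apply: cvg_pair2.
  apply: cvg_scale; apply: cvg_mulmx; first apply: cvg_mulmx.
  - exact: cvg_fst'.
  - exact: cvg_uni.
  - by apply: cvg_ad; apply: cvg_fst'.
apply: cmulG; first apply: cmulG.
- exact: cvg_snd'.
- exact: cvg_cst.
- by apply: cinvG; apply: cvg_snd'.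
Qed.

Lemma cvg_Psi k g (p0 : (H * H) * (R * R)) : Psi k g @ nbhs p0 --> Psi k g p0.
Proof.
have h11 : (fun p : (H * H) * (R * R) => p.1.1) @ nbhs p0 --> p0.1.1.
  by apply: cvg_fst'; apply: cvg_fst'; apply: cvg_id.
have h12 : (fun p : (H * H) * (R * R) => p.1.2) @ nbhs p0 --> p0.1.2.
  by apply: cvg_snd'; apply: cvg_fst'; apply: cvg_id.
have h21 : (fun p : (H * H) * (R * R) => p.2.1) @ nbhs p0 --> p0.2.1.
  by apply: cvg_fst'; apply: cvg_snd'; apply: cvg_id.
have h22 : (fun p : (H * H) * (R * R) => p.2.2) @ nbhs p0 --> p0.2.2.
  by apply: cvg_snd'; apply: cvg_snd'; apply: cvg_id.
have c1 := @cvg_Cf k g _ _ _ _ _ _ _ h11 h21.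
have c2 := @cvg_Cf k g _ _ _ _ _ _ _ h12 h22.
rewrite /Psi; apply: cvg_mulH; last exact: c2.
apply: cvg_pair2.
  by apply: cvg_ad; apply: cvg_fst'; exact: c1.
by apply: cinvG; apply: cvg_snd'; exact: c1.
Qed.

Lemma Cf0 k g (y : H) : \det y.1 = 1 -> Cf k g y 0 = (k *: 1%:M, mulG (mulG y.2 g) (invG y.2)).
Proof. by move=> hy; rewrite /Cf uni0 mulmx1 ad_mul. Qed.

Lemma Psi0 k g (y : H) : k * k = 1 -> \det y.1 = 1 -> Psi k g ((y, y), (0, 0)) = oneH R eG.
Proof.
move=> hk hy; rewrite /Psi /= Cf0 // /mulH /oneH /= uni0 mulmx1 ad_mul //.
by rewrite ad_scale1 -scalemxAl -scalemxAr mulmx1 scalerA hk scale1r mVG.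
Qed.

Lemma conj_id k g (P : 'M[R]_2) (t l : R) (d : H) :
  Gt d -> \det P = 1 -> l != 0 ->
  mulH mulG (mulH mulG d (k *: (P *m unipotent t *m invmx P), g)) (invH invG d)
  = Cf k g (mulH mulG d (P *m diagD l, eG)) (t / l ^+ 2).
Proof.
move=> gd hP l0; rewrite /mulH /invH /Cf /=.
have dd : \det d.1 = 1 by apply: Gt_det.
have hw : \det (d.1 *m (P *m diagD l)) = 1.
  by rewrite !det_mulmx dd hP det_diagD // !mul1r.
have ud : d.1 \in unitmx by apply: unit_det1.
have uP : P \in unitmx by apply: unit_det1.
have uw : (d.1 *m (P *m diagD l)) \in unitmx by apply: unit_det1.
rewrite mG1 -(ad_inv _ hw); congr (_, _).
rewrite -scalemxAr -scalemxAl; congr (_ *: _).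
rewrite -[LHS](mulmxK uw) -[RHS](mulmxK uw); congr (_ *m _).
rewrite (mulmxKV uw) !mulmxA (mulmxKV ud) (mulmxKV uP).
by rewrite -!mulmxA uni_diag.
Qed.
End Main.

Lemma phi_ge (phi : nat -> nat) : (forall n, (phi n < phi n.+1)%N) -> forall n, (n <= phi n)%N.
Proof.
move=> hphi; elim=> [//|n ih]; exact: (leq_ltn_trans ih (hphi n)).
Qed.

Lemma sn_small (R : realType) (t : R) (lam : nat -> R) (phi : nat -> nat) :
  (forall n, 1 < lam n) -> lam @ \oo --> +oo -> (forall n, (phi n < phi n.+1)%N) ->
  forall S : set R, nbhs 0 S -> exists N, forall n, (N <= n)%N -> S (t / lam (phi n) ^+ 2).
Proof.
move=> hl1 hinf hphi S /nbhs_ballP [e e0 sub].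
have := (proj1 (cvgryPgt _) hinf) (`|t| / e + 1).
case=> N _ hN; exists N => n Nn; apply: sub.
have hL := hN _ (leq_trans Nn (phi_ge _ hphi n)); have := hl1 (phi n).
move: hL; set L := lam (phi n) => hL hL1.
rewrite /ball /= sub0r normrN normrM normfV normrX.
have L0 : 0 < L by lra.
rewrite (gtr0_norm L0) ltr_pdivrMr ?exprn_gt0 //.
have e0' : 0 < e := e0.
have : `|t| / e < L by lra.
rewrite ltr_pdivrMr // => ht.
have : L <= L ^+ 2 by rewrite expr2 ler_peMl //; lra.
move=> hLL; nra.
Qed.

Lemma get_close (R : realType) (G : topologicalType) (mulG : G -> G -> G) (invG : G -> G) (eG : G)
  (hG : is_topological_group mulG invG eG) (Gt : set ('M[R]_2 * G))
  (hsub : lifted_subgroup mulG invG eG Gt) (z : nat -> 'M[R]_2 * G) (y : 'M[R]_2 * G) :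
  quot_converges mulG Gt z y -> forall Om, nbhs y Om ->
  exists N, forall n, (N <= n)%N -> exists d, Gt d /\ Om (mulH mulG d (z n)).
Proof.
move=> hc Om nO.
have := hc (Wof R G mulG Gt (interior Om)) (Wof_open R G mulG invG eG hG Gt _ (@open_interior _ Om))
  (Wof_sat R G mulG invG eG hG Gt hsub _) (Wof_self R G mulG invG eG hG Gt hsub _ _ nO).
case=> N hN; exists N => n /hN [d [gd hd]]; exists d; split => //.
exact: interior_subset.
Qed.

Theorem mainTheorem6 (R : realType) (G : topologicalType)
  (mulG : G -> G -> G) (invG : G -> G) (eG : G)
  (hG : is_topological_group mulG invG eG)
  (hT2 : hausdorff_space G) (hlc : locally_compact [set: G])
  (hconn : connected [set: G])
  (Gt : set ('M[R]_2 * G))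
  (hsub : lifted_subgroup mulG invG eG Gt) (hdisc : discrete_set Gt)
  (hpar : exists h, Gt h /\ semi_parabolic h) :
  exists x : 'M[R]_2 * G, inSLG x /\
    forall lam : nat -> R, (forall n, 1 < lam n) -> lam @ \oo --> +oo ->
      forall phi : nat -> nat, (forall n, (phi n < phi n.+1)%N) ->
        ~ exists y : 'M[R]_2 * G, inSLG y /\
            quot_converges mulG Gt
              (fun n => (x.1 *m diagD (lam (phi n)), x.2)) y.
Proof.
case: hpar => h [gh [P [t [hP [t0 hF]]]]].
have [k [hk hk1]] : exists k : R, k * k = 1 /\ h.1 = k *: (P *m unipotent t *m invmx P).
  case: hF => ->.
    by exists 1; rewrite mulr1 scale1r.
  exists (-1); split; first by rewrite mulN1r opprK.
  by rewrite scaleN1r.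
set g := h.2.
have hh : h = (k *: (P *m unipotent t *m invmx P), g) by rewrite -hk1 /g -surjective_pairing.
exists (P, eG); split; first exact: hP.
move=> lam hl1 hlinf phi hphi [y [hy hconv]].
rewrite /inSLG in hy.
pose sn n := t / lam (phi n) ^+ 2.
have l0 : forall n, lam (phi n) != 0.
  by move=> n; have := hl1 (phi n) => h1; apply: lt0r_neq0; apply: lt_trans h1.
have sn0 : forall n, sn n != 0 by move=> n; rewrite mulf_neq0 // invr_eq0 expf_neq0.
have hc : forall d n, Gt d -> mulH mulG (mulH mulG d h) (invH invG d) =
    Cf R G mulG invG k g (mulH mulG d (P *m diagD (lam (phi n)), eG)) (sn n).
  by move=> d n gd; rewrite hh; exact: (conj_id R G mulG invG eG hG Gt hsub k g P t (lam (phi n)) d gd hP (l0 n)).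
have [U0 nU0 hU0] := hdisc _ (Gt_one R G mulG invG eG Gt hsub).
have nP : nbhs ((y,y),((0:R),(0:R))) (Psi R G mulG invG k g @^-1` U0).
  have := cvg_Psi R G mulG invG eG hG k g ((y,y),(0,0)).
  by rewrite (Psi0 R G mulG invG eG hG) //; move=> /(_ U0 nU0).
case: nP => -[A B] /= [nA nB] sAB.
case: nA => -[A1 A2] /= [nA1 nA2] sA.
case: nB => -[B1 B2] /= [nB1 nB2] sB.
have hPsi : forall w w' s s', A1 w -> A2 w' -> B1 s -> B2 s' ->
    U0 (Psi R G mulG invG k g ((w, w'), (s, s'))).
  move=> w w' s s' a1 a2 b1 b2; apply: (sAB ((w, w'), (s, s'))); split.
    by apply: (sA (w, w')).
  by apply: (sB (s, s')).
have gC : forall d, Gt d -> Gt (mulH mulG (mulH mulG d h) (invH invG d)).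
  move=> d gd; apply: (Gt_mul R G mulG invG eG Gt hsub); last exact: (Gt_inv R G mulG invG eG Gt hsub).
  exact: (Gt_mul R G mulG invG eG Gt hsub).
have nO0 : nbhs y (A1 `&` A2) by apply: filterI.
have nS0 : nbhs (0:R) (B1 `&` B2) by apply: filterI.
have [N0 hN0] := @get_close _ _ _ _ _ hG _ hsub _ _ hconv _ nO0.
have [N0' hN0'] := sn_small R t lam phi hl1 hlinf hphi _ nS0.
have [d0 [gd0 [oA oB]]] := hN0 (maxn N0 N0') (leq_maxl _ _).
have [sA0 sB0] := hN0' (maxn N0 N0') (leq_maxr _ _).
set n0 := maxn N0 N0' in oA oB sA0 sB0.
set c0 := mulH mulG (mulH mulG d0 h) (invH invG d0).
have gc0 : Gt c0 := gC d0 gd0.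
have ec0 : c0 = _ := hc d0 n0 gd0.
set w0 := mulH mulG d0 (P *m diagD (lam (phi n0)), eG) in ec0.
have step2 : forall Bm, nbhs (k *: 1%:M : 'M[R]_2) Bm -> Bm c0.1.
  move=> Bm nBm.
  have cC : (fun q : ('M[R]_2 * G) * R => Cf R G mulG invG k g q.1 q.2) @ nbhs (y, (0:R))
      --> Cf R G mulG invG k g y 0.
    apply: (cvg_Cf R G mulG invG eG hG).
      by apply: (cvg_fst' _ _ _ _ _ (fun q => q) (y, (0:R))); apply: cvg_id.
    by apply: (cvg_snd' _ _ _ _ _ (fun q => q) (y, (0:R))); apply: cvg_id.
  rewrite (Cf0 R G mulG invG) // in cC.
  have : nbhs (y, (0:R)) [set q | Bm (Cf R G mulG invG k g q.1 q.2).1].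
    have hB : nbhs ((k *: 1%:M : 'M[R]_2), mulG (mulG y.2 g) (invG y.2)) [set p : 'M[R]_2 * G | Bm p.1].
      exists (Bm, setT) => /=; first by split => //; exact: filterT.
      by move=> [a b] [].
    exact: (cC _ hB).
  case=> -[C1 C2] /= [nC1 nC2] sC.
  have nO1 : nbhs y ((A1 `&` A2) `&` C1) by apply: filterI.
  have nS1 : nbhs (0:R) ((B1 `&` B2) `&` C2) by apply: filterI.
  have [N1 hN1] := @get_close _ _ _ _ _ hG _ hsub _ _ hconv _ nO1.
  have [N1' hN1'] := sn_small R t lam phi hl1 hlinf hphi _ nS1.
  have [d1 [gd1 [[pA pB] pC]]] := hN1 (maxn N1 N1') (leq_maxl _ _).
  have [[qA qB] qC] := hN1' (maxn N1 N1') (leq_maxr _ _).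
  set n1 := maxn N1 N1' in pA pB pC qA qB qC.
  set c1 := mulH mulG (mulH mulG d1 h) (invH invG d1).
  have gc1 : Gt c1 := gC d1 gd1.
  have ec1 : c1 = _ := hc d1 n1 gd1.
  set w1 := mulH mulG d1 (P *m diagD (lam (phi n1)), eG) in ec1.
  have hU : U0 (mulH mulG (invH invG c0) c1).
    have -> : invH invG c0 = (ad c0.1, invG c0.2).
      by rewrite /invH ad_inv //; apply: (Gt_det R G mulG invG eG Gt hsub).
    rewrite ec0 ec1; exact: (hPsi w0 w1 (sn n0) (sn n1) oA pB sA0 qB).
  have g01 : Gt (mulH mulG (invH invG c0) c1).
    apply: (Gt_mul R G mulG invG eG Gt hsub) => //; exact: (Gt_inv R G mulG invG eG Gt hsub).
  have e01 : mulH mulG (invH invG c0) c1 = oneH R eG.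
    have : (U0 `&` Gt) (mulH mulG (invH invG c0) c1) by split.
    by rewrite hU0.
  have c10 := inv_cancel R G mulG invG eG hG Gt hsub _ _ gc0 e01.
  have -> : d0.1 *m h.1 *m invmx d0.1 = c1.1 by rewrite c10.
  rewrite ec1; exact: (sC (w1, sn n1)).
have hM : c0.1 = k *: 1%:M.
  apply: (@norm_hausdorff R 'M[R]_2) => Ax Bm nA nBm; exists c0.1; split.
    exact: nbhs_singleton nA.
  exact: step2.
have dw0 : \det w0.1 = 1.
  rewrite /w0 /= !det_mulmx hP det_diagD // (Gt_det R G mulG invG eG Gt hsub _ gd0).
  by rewrite !mul1r.
rewrite ec0 /= in hM.
have k0 : k != 0.
  by apply/eqP => k0; move: hk; rewrite k0 mul0r => /eqP; rewrite eq_sym oner_eq0.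
have hM' : w0.1 *m unipotent (sn n0) *m ad w0.1 = 1%:M.
  by apply: (scalerI k0); rewrite hM.
have : unipotent (sn n0) = 1%:M.
  move: (w0.1) dw0 hM' => W dW hW.
  have := congr1 (fun M => ad W *m M *m W) hW.
  rewrite /= mulmx1 ad_mul' // !mulmxA ad_mul' // mul1mx -mulmxA ad_mul' // mulmx1.
  by [].
by move/uni_eq1; apply/eqP; exact: sn0.
Qed.
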